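(* Let $\mathcal{X}$ be a finite nonempty set of types and $\Phi=(\Phi_{xy})_{x,y\in\mathcal{X}}$ a real matrix with $\Phi_{xy}=\Phi_{yx}$. Let $(n^k)_{k\ge1}$ be a sequence of vectors of nonnegative integers $n^k=(n^k_x)_{x\in\mathcal{X}}$ with $N^k=\sum_x n^k_x\to\infty$ and $n^k_x/N^k\to f_x$ for each $x$, as $k\to\infty$. Then $$\lim_{k\to\infty}\frac{\mathcal{W}_{\mathcal{P}}(n^k,\Phi)}{N^k}=\lim_{k\to\infty}\frac{\mathcal{W}_{\mathcal{B}}(n^k,n^k,\Phi/2)}{N^k}=\mathcal{W}_{\mathcal{B}}(f,f,\Phi/2).$$
   Context: Feasible roommate matchings: $\mathcal{P}(n)=\{\mu=(\mu_{xy})_{x,y\in\mathcal{X}}:\ \mu_{xy}\in\mathbb{N},\ \mu_{xy}=\mu_{yx},\ 2\mu_{xx}+\sum_{y\neq x}\mu_{xy}\le n_x\ \forall x\}$; total surplus $S_R(\mu;\Phi)=\sum_x\mu_{xx}\Phi_{xx}+\sum_{x\neq y}\mu_{xy}\Phi_{xy}/2$; $\mathcal{W}_{\mathcal{P}}(n,\Phi)=\max_{\mu\in\mathcal{P}(n)}S_R(\mu;\Phi)$. For integer $n$, $\mathcal{B}(n,n)=\{\nu\in\mathbb{N}^{\mathcal{X}\times\mathcal{X}}:\ \sum_y\nu_{xy}\le n_x\ \forall x,\ \sum_x\nu_{xy}\le n_y\ \forall y\}$ and $\mathcal{W}_{\mathcal{B}}(n,n,\Phi/2)=\max_{\nu\in\mathcal{B}(n,n)}\sum_{x,y}\nu_{xy}\Phi_{xy}/2$.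 For a vector $f$ of nonnegative reals, $\mathcal{W}_{\mathcal{B}}(f,f,\Phi/2)$ is defined by the same maximization with $\nu_{xy}\in\mathbb{N}$ replaced by $\nu_{xy}\ge0$ real (a linear program). *)

(* Defs.v *)
From HB Require Import structures.
From mathcomp Require Import all_boot all_order all_algebra.
From mathcomp Require Import all_classical all_reals all_analysis.
Set Implicit Arguments. Unset Strict Implicit. Unset Printing Implicit Defensive.
Import Order.TTheory GRing.Theory Num.Theory.
Local Open Scope ring_scope.
Local Open Scope classical_set_scope.

Section Defs.
Variables (R : realType) (X : finType).

Definition roommate_feasible (n : X -> nat) (mu : X -> X -> nat) : Prop :=
  (forall x y, mu x y = mu y x) /\
  (forall x, (2 * mu x x + \sum_(y | y != x) mu x y <= n x)%N).

Definition S_R (mu : X -> X -> nat) (Phi : X -> X -> R) : R :=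
  \sum_x (mu x x)%:R * Phi x x
  + \sum_x \sum_(y | y != x) (mu x y)%:R * Phi x y / 2.

(* W_P(n, Phi) = max over P(n) (finite nonempty set, so sup = max). *)
Definition W_P (n : X -> nat) (Phi : X -> X -> R) : R :=
  sup [set S_R mu Phi | mu in [set mu | roommate_feasible n mu]].

Definition bip_feasible_nat (n m : X -> nat) (nu : X -> X -> nat) : Prop :=
  (forall x, (\sum_y nu x y <= n x)%N) /\ (forall y, (\sum_x nu x y <= m y)%N).

Definition W_B_nat (n m : X -> nat) (Psi : X -> X -> R) : R :=
  sup [set \sum_x \sum_y (nu x y)%:R * Psi x y
      | nu in [set nu | bip_feasible_nat n m nu]].

Definition bip_feasible_real (f g : X -> R) (nu : X -> X -> R) : Prop :=
  (forall x y, 0 <= nu x y) /\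
  (forall x, \sum_y nu x y <= f x) /\ (forall y, \sum_x nu x y <= g y).

Definition W_B_real (f g : X -> R) (Psi : X -> X -> R) : R :=
  sup [set \sum_x \sum_y nu x y * Psi x y
      | nu in [set nu | bip_feasible_real f g nu]].

End Defs.

(* Main.v *)
Require Import Defs.
From HB Require Import structures.
From mathcomp Require Import all_boot all_order all_algebra.
From mathcomp Require Import all_classical all_reals all_analysis.
From mathcomp Require Import zify ring lra.
Set Implicit Arguments. Unset Strict Implicit. Unset Printing Implicit Defensive.
Import Order.TTheory GRing.Theory Num.Theory numFieldNormedType.Exports.
Local Open Scope ring_scope.
Local Open Scope classical_set_scope.
Lemma sup_le_of (R : realType) (S : set R) (b : R) :
  S !=set0 -> (forall s, S s -> s <= b) -> sup S <= b.
Proof. by move=> h1 h2; apply: ge_sup => // s; exact: h2. Qed.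

Lemma le_sup_of (R : realType) (S : set R) (b s : R) :
  (forall s, S s -> s <= b) -> S s -> s <= sup S.
Proof.
move=> hb hs; apply: sup_upper_bound => //; split; [by exists s | by exists b].
Qed.

Lemma sup_approx (R : realType) (S : set R) (b s0 eps : R) :
  (forall s, S s -> s <= b) -> S s0 -> 0 < eps -> exists2 e, S e & sup S - eps < e.
Proof.
move=> hb hs he; apply: sup_adherent => //; split; [by exists s0 | by exists b].
Qed.

Section LP.
Variables (R : realType) (X : finType).

Definition val (Psi : X -> X -> R) (nu : X -> X -> R) := \sum_x \sum_y nu x y * Psi x y.
Definition Mb (Psi : X -> X -> R) := \sum_x \sum_y `|Psi x y|.

Lemma term_le_sum (F : X -> R) y : (forall z, 0 <= F z) -> F y <= \sum_z F z.
Proof. by move=> h; rewrite (bigD1 y) //= lerDl sumr_ge0. Qed.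

Lemma Mb_ge0 (Psi : X -> X -> R) : 0 <= Mb Psi.
Proof. by apply: sumr_ge0 => x _; apply: sumr_ge0 => y _. Qed.

Lemma Mb_ge (Psi : X -> X -> R) x y : `|Psi x y| <= Mb Psi.
Proof.
apply: (@le_trans _ _ (\sum_z `|Psi x z|)).
  by apply: (term_le_sum (F := fun z => `|Psi x z|)).
by apply: (term_le_sum (F := fun x => \sum_z `|Psi x z|)) => z; apply: sumr_ge0.
Qed.

Lemma val_bound (f : X -> R) (Psi nu : X -> X -> R) : bip_feasible_real f f nu ->
  val Psi nu <= \sum_x \sum_y f x * `|Psi x y|.
Proof.
move=> [h0 [hr hc]]; apply: ler_sum => x _; apply: ler_sum => y _.
apply: (le_trans (ler_wpM2l (h0 x y) (ler_norm _))).
apply: ler_wpM2r => //; apply: le_trans (hr x); exact: term_le_sum.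
Qed.

Lemma val0_feas (f : X -> R) : (forall x, 0 <= f x) -> bip_feasible_real f f (fun _ _ => 0).
Proof. by move=> hf; split=> //; split=> x; rewrite big1. Qed.

Lemma val0 (Psi : X -> X -> R) : val Psi (fun _ _ => 0) = 0.
Proof. by rewrite /val big1 // => x _; rewrite big1 // => y _; rewrite mul0r. Qed.

End LP.
Section Transfer.
Variables (R : realType) (X : finType).

Lemma transfer (g h : X -> R) (Psi nu : X -> X -> R) :
  (forall x, 0 <= h x) -> bip_feasible_real g g nu ->
  exists nu', bip_feasible_real h h nu' /\
    val Psi nu - 2 * Mb Psi * \sum_x `|g x - h x| <= val Psi nu'.
Proof.
move=> hh [h0 [hr hc]].
pose a x := if h x < g x then h x / g x else 1.
have a01 x : 0 <= a x <= 1.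
  rewrite /a; case: ifP => [hlt|_]; last by rewrite ler01 lexx.
  have gp : 0 < g x by apply: le_lt_trans (hh x) hlt.
  by rewrite divr_ge0 ?(ltW gp) //= ler_pdivrMr // mul1r ltW.
have a0 x : 0 <= a x by case/andP: (a01 x).
have a1 x : a x <= 1 by case/andP: (a01 x).
have ag x : a x * g x <= h x.
  rewrite /a; case: ifP => [hlt|]; last by rewrite mul1r => /negbT; rewrite -leNgt.
  have gp : 0 < g x by apply: le_lt_trans (hh x) hlt.
  by rewrite divfK // gt_eqF.
have eg x : (1 - a x) * g x <= `|g x - h x|.
  rewrite /a; case: ifP => [hlt|_]; last by rewrite subrr mul0r normr_ge0.
  have gp : 0 < g x by apply: le_lt_trans (hh x) hlt.
  by rewrite mulrBl mul1r divfK ?gt_eqF // ler_norm.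
exists (fun x y => a x * a y * nu x y); split.
  split; first by move=> x y; rewrite !mulr_ge0.
  split=> [x|y].
    have -> : \sum_y a x * a y * nu x y = a x * \sum_y a y * nu x y.
      by rewrite mulr_sumr; apply: eq_bigr => y _; rewrite mulrA.
    apply: le_trans (ag x); apply: ler_wpM2l => //.
    apply: le_trans (hr x); apply: ler_sum => y _; exact: ler_piMl.
  have -> : \sum_x a x * a y * nu x y = a y * \sum_x a x * nu x y.
    by rewrite mulr_sumr; apply: eq_bigr => x _; ring.
  apply: le_trans (ag y); apply: ler_wpM2l => //.
  apply: le_trans (hc y); apply: ler_sum => x _; exact: ler_piMl.
set M := Mb Psi.
have M0 : 0 <= M by exact: Mb_ge0.
have term x y : nu x y * Psi x y - a x * a y * nu x y * Psi x y <=
    M * ((1 - a x) * nu x y + (1 - a y) * nu x y).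
  have c0 : 0 <= 1 - a x * a y by rewrite subr_ge0 mulr_ile1.
  have c1 : 1 - a x * a y <= (1 - a x) + (1 - a y).
    have p : 0 <= (1 - a x) * (1 - a y) by rewrite mulr_ge0 // subr_ge0.
    have -> : 1 - a x + (1 - a y) = 1 - a x * a y + (1 - a x) * (1 - a y) by ring.
    by rewrite lerDl.
  have e1 : nu x y * Psi x y - a x * a y * nu x y * Psi x y =
            (1 - a x * a y) * (nu x y * Psi x y) by ring.
  have e2 : M * ((1 - a x) * nu x y + (1 - a y) * nu x y) =
            ((1 - a x) + (1 - a y)) * (nu x y * M) by ring.
  rewrite e1 e2; apply: (@le_trans _ _ ((1 - a x * a y) * (nu x y * M))).
    apply: ler_wpM2l => //; apply: ler_wpM2l => //.
    exact: le_trans (ler_norm _) (Mb_ge _ _ _).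
  by apply: ler_wpM2r => //; rewrite mulr_ge0.
set D := \sum_x `|g x - h x|.
have P1 : \sum_x \sum_y (1 - a x) * nu x y <= D.
  apply: ler_sum => x _; rewrite -mulr_sumr; apply: le_trans (eg x).
  by apply: ler_wpM2l => //; rewrite subr_ge0.
have P2 : \sum_x \sum_y (1 - a y) * nu x y <= D.
  rewrite exchange_big; apply: ler_sum => y _; rewrite -mulr_sumr; apply: le_trans (eg y).
  by apply: ler_wpM2l => //; rewrite subr_ge0.
have L : val Psi nu - val Psi (fun x y => a x * a y * nu x y) <=
   M * (\sum_x \sum_y (1 - a x) * nu x y + \sum_x \sum_y (1 - a y) * nu x y).
  rewrite /val -sumrB -big_split mulr_sumr; apply: ler_sum => x _.
  rewrite -sumrB -big_split mulr_sumr; apply: ler_sum => y _; exact: term.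
have L2 : M * (\sum_x \sum_y (1 - a x) * nu x y + \sum_x \sum_y (1 - a y) * nu x y)
   <= M * (D + D) by apply: ler_wpM2l => //; exact: lerD.
lra.
Qed.

End Transfer.
Section Rounding.
Variables (R : realType) (X : finType).

Lemma nat_to_real (n : X -> nat) (nu : X -> X -> nat) :
  bip_feasible_nat n n nu ->
  bip_feasible_real (fun x => (n x)%:R : R) (fun x => (n x)%:R) (fun x y => (nu x y)%:R).
Proof.
move=> [hr hc]; split=> //; split=> [x|y]; rewrite -natr_sum ler_nat; [exact: hr|exact: hc].
Qed.

Lemma rounding (n : X -> nat) (Psi nu : X -> X -> R) :
  bip_feasible_real (fun x => (n x)%:R) (fun x => (n x)%:R) nu ->
  exists mu, bip_feasible_nat n n mu /\
    val Psi nu - Mb Psi <= val Psi (fun x y => (mu x y)%:R).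
Proof.
move=> [h0 [hr hc]].
exists (fun x y => Num.truncn (nu x y)); split.
  split=> [x|y]; rewrite -(ler_nat R) natr_sum.
    by apply: le_trans (hr x); apply: ler_sum => y _; rewrite truncn_le.
  by apply: le_trans (hc y); apply: ler_sum => x _; rewrite truncn_le.
suff : val Psi nu - val Psi (fun x y => (Num.truncn (nu x y))%:R) <= Mb Psi by lra.
rewrite /val /Mb -sumrB; apply: ler_sum => x _; rewrite -sumrB; apply: ler_sum => y _.
have /andP[t1 t2] := truncn_itv (h0 x y).
rewrite -mulrBl.
apply: le_trans (ler_wpM2l _ (ler_norm _)) _; first by rewrite subr_ge0.
apply: ler_piMl => //; rewrite -addn1 natrD in t2; lra.
Qed.

End Rounding.
Section Room.
Variables (R : realType) (X : finType).

Definition nu_of (mu : X -> X -> nat) x y : nat :=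
  if x == y then (2 * mu x x)%N else mu x y.

Lemma S_R_val (mu : X -> X -> nat) (Phi : X -> X -> R) :
  S_R mu Phi = val (fun x y => Phi x y / 2) (fun x y => (nu_of mu x y)%:R).
Proof.
rewrite /S_R /val -big_split; apply: eq_bigr => x _ /=.
rewrite [RHS](bigD1 x) //= /nu_of eqxx; congr (_ + _).
  by rewrite natrM; field.
by apply: eq_bigr => y hy; rewrite eq_sym (negbTE hy) mulrA.
Qed.

Lemma room_feas (n : X -> nat) (mu : X -> X -> nat) :
  roommate_feasible n mu -> bip_feasible_nat n n (nu_of mu).
Proof.
move=> [hs hc]; split=> [x|y].
  rewrite (bigD1 x) //= /nu_of eqxx.
  rewrite (eq_bigr (fun y => mu x y)); first exact: hc.
  by move=> y hy; rewrite eq_sym (negbTE hy).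
rewrite (bigD1 y) //= /nu_of eqxx.
rewrite (eq_bigr (fun x => mu y x)); first exact: hc.
by move=> x hx; rewrite (negbTE hx) hs.
Qed.

Lemma bip_to_room (n : X -> nat) (nu : X -> X -> nat) (Phi : X -> X -> R) :
  (forall x y, Phi x y = Phi y x) ->
  bip_feasible_nat n n nu ->
  exists mu, roommate_feasible n mu /\
    val (fun x y => Phi x y / 2) (fun x y => (nu x y)%:R) - Mb Phi <= S_R mu Phi.
Proof.
move=> Phi_sym [hr hc].
pose mu x y := if x == y then (nu x x)./2 else (nu x y + nu y x)./2.
exists mu; split.
  split.
    move=> x y; rewrite /mu eq_sym; case: eqP => [->|_] //; by rewrite addnC.
  move=> x.
  have hrx := hr x; have hcx := hc x.
  rewrite (bigD1 x) //= in hrx; rewrite (bigD1 x) //= in hcx.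
  have e : \sum_(y | y != x) mu x y = \sum_(y | y != x) ((nu x y + nu y x)./2).
    by apply: eq_bigr => y hy; rewrite /mu eq_sym (negbTE hy).
  rewrite e /mu eqxx.
  have h2 : (2 * \sum_(y | y != x) (nu x y + nu y x)./2 <=
             \sum_(y | y != x) nu x y + \sum_(y | y != x) nu y x)%N.
    rewrite -big_split big_distrr /=; apply: leq_sum => y _; lia.
  have E : (\sum_(y | y != x) (nu x y + nu y x)./2)%R =
           (\sum_(y | y != x) (nu x y + nu y x)./2)%N by [].
  rewrite E; lia.
set Psi := fun x y => Phi x y / 2.
rewrite S_R_val.
set w := nu_of mu.
have ET : val Psi (fun x y => (nu y x)%:R) = val Psi (fun x y => (nu x y)%:R).
  rewrite /val exchange_big; apply: eq_bigr => y _; apply: eq_bigr => x _.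
  by rewrite /Psi Phi_sym.
have E1 : 2 * val Psi (fun x y => (nu x y)%:R) =
          \sum_x \sum_y ((nu x y + nu y x)%N%:R) * Psi x y.
  have -> : 2 * val Psi (fun x y => (nu x y)%:R) =
     val Psi (fun x y => (nu x y)%:R) + val Psi (fun x y => (nu y x)%:R) by rewrite ET; ring.
  rewrite /val -big_split; apply: eq_bigr => x _; rewrite -big_split; apply: eq_bigr => y _.
  by rewrite natrD mulrDl.
have E2 : 2 * val Psi (fun x y => (w x y)%:R) =
          \sum_x \sum_y ((2 * w x y)%N%:R) * Psi x y.
  rewrite /val mulr_sumr; apply: eq_bigr => x _; rewrite mulr_sumr; apply: eq_bigr => y _.
  by rewrite natrM; ring.
suff : 2 * val Psi (fun x y => (nu x y)%:R) - 2 * val Psi (fun x y => (w x y)%:R) <= Mb Phi.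
  by have := Mb_ge0 Phi; lra.
rewrite E1 E2 /Mb -sumrB; apply: ler_sum => x _; rewrite -sumrB; apply: ler_sum => y _.
have hA : (2 * w x y <= nu x y + nu y x <= 2 * w x y + 2)%N.
  rewrite /w /nu_of /mu; case: eqP => [->|_]; rewrite ?eqxx; apply/andP; split; lia.
case/andP: hA => hA1 hA2.
rewrite -(ler_nat R) in hA1; rewrite -(ler_nat R) natrD in hA2.
rewrite -mulrBl /Psi.
set c := _ - _.
have c0 : 0 <= c by rewrite /c subr_ge0.
have c2 : c <= 2 by rewrite /c; lra.
have t1 : c * (Phi x y / 2) <= c * (`|Phi x y| / 2).
  by apply: ler_wpM2l => //; apply: ler_wpM2r => //; exact: ler_norm.
have t2 : c * (`|Phi x y| / 2) <= 2 * (`|Phi x y| / 2).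
  by apply: ler_wpM2r => //; rewrite divr_ge0.
lra.
Qed.

End Room.
Section Bounds.
Variables (R : realType) (X : finType).

Definition BN (n : X -> nat) (Psi : X -> X -> R) := \sum_x \sum_y (n x)%:R * `|Psi x y|.

Lemma zero_nat_feas (n : X -> nat) : bip_feasible_nat n n (fun _ _ => 0%N).
Proof. by split=> x; rewrite big1. Qed.

Lemma WBnat_ge (n : X -> nat) (Psi : X -> X -> R) nu :
  bip_feasible_nat n n nu -> val Psi (fun x y => (nu x y)%:R) <= W_B_nat n n Psi.
Proof.
move=> h; apply: (@le_sup_of _ _ (BN n Psi)); last by exists nu.
move=> s [nu' h' <-]; exact: (val_bound Psi (nat_to_real R h')).
Qed.

Lemma WBnat_le (n : X -> nat) (Psi : X -> X -> R) b :
  (forall nu, bip_feasible_nat n n nu -> val Psi (fun x y => (nu x y)%:R) <= b) ->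
  W_B_nat n n Psi <= b.
Proof.
move=> h; apply: sup_le_of.
  by exists (val Psi (fun x y => (0%N)%:R)), (fun _ _ => 0%N) => //; exact: zero_nat_feas.
by move=> s [nu h' <-]; exact: h.
Qed.

Lemma WBreal_ge (f : X -> R) (Psi nu : X -> X -> R) :
  bip_feasible_real f f nu -> val Psi nu <= W_B_real f f Psi.
Proof.
move=> h; apply: (@le_sup_of _ _ (\sum_x \sum_y f x * `|Psi x y|)); last by exists nu.
move=> s [nu' h' <-]; exact: (val_bound Psi h').
Qed.

Lemma WBreal_approx (f : X -> R) (Psi : X -> X -> R) e :
  (forall x, 0 <= f x) -> 0 < e ->
  exists nu, bip_feasible_real f f nu /\ W_B_real f f Psi - e < val Psi nu.
Proof.
move=> f0 e0.
have ub : forall s, [set val Psi nu | nu in [set nu | bip_feasible_real f f nu]] s ->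
    s <= \sum_x \sum_y f x * `|Psi x y|.
  by move=> s [nu' h' <-]; exact: (val_bound Psi h').
have [s [nu h <-] hs] := sup_approx ub
   (ex_intro2 _ _ (fun _ _ => 0) (val0_feas f0) erefl) e0.
by exists nu.
Qed.

Lemma WP_ge (n : X -> nat) (Phi : X -> X -> R) mu :
  roommate_feasible n mu -> S_R mu Phi <= W_P n Phi.
Proof.
move=> h; apply: (@le_sup_of _ _ (BN n (fun x y => Phi x y / 2))); last by exists mu.
move=> s [mu' h' <-]; rewrite S_R_val; exact: (val_bound _ (nat_to_real R (room_feas h'))).
Qed.

Lemma WP_le (n : X -> nat) (Phi : X -> X -> R) b :
  (forall mu, roommate_feasible n mu -> S_R mu Phi <= b) -> W_P n Phi <= b.
Proof.
move=> h; apply: sup_le_of.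
  exists (S_R (fun _ _ => 0%N) Phi), (fun _ _ => 0%N) => //.
  by split=> // x; rewrite big1.
by move=> s [mu h' <-]; exact: h.
Qed.

Lemma scale_feas (g h : X -> R) (c : R) (nu : X -> X -> R) :
  0 <= c -> (forall x, g x * c = h x) -> bip_feasible_real g g nu ->
  bip_feasible_real h h (fun x y => nu x y * c).
Proof.
move=> c0 gh [h0 [hr hc]]; split; first by move=> x y; rewrite mulr_ge0.
split=> [x|y]; rewrite -mulr_suml -gh; apply: ler_wpM2r => //.
Qed.

Lemma val_scale (Psi nu : X -> X -> R) c :
  val Psi (fun x y => nu x y * c) = val Psi nu * c.
Proof.
rewrite /val mulr_suml; apply: eq_bigr => x _; rewrite mulr_suml.
by apply: eq_bigr => y _; rewrite mulrAC.
Qed.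

Lemma upperU (n : X -> nat) (f : X -> R) (Psi : X -> X -> R) (N : R) :
  (forall x, 0 <= f x) -> 0 < N ->
  W_B_nat n n Psi <= N * (W_B_real f f Psi + 2 * Mb Psi * \sum_x `|(n x)%:R / N - f x|).
Proof.
move=> f0 N0; apply: WBnat_le => nu hnu.
have Ni : 0 <= N^-1 by rewrite invr_ge0 ltW.
have h1 := scale_feas (c := N^-1) (h := fun x => (n x)%:R / N)
   Ni (fun x => erefl) (nat_to_real R hnu).
have [nu'' [h2 h3]] := transfer Psi f0 h1.
have h4 := WBreal_ge Psi h2.
rewrite val_scale in h3.
rewrite -ler_pdivrMl //; rewrite mulrC; lra.
Qed.

Lemma lowerL (n : X -> nat) (f : X -> R) (Psi nu : X -> X -> R) (N : R) :
  0 < N -> bip_feasible_real f f nu ->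
  N * (val Psi nu - 2 * Mb Psi * \sum_x `|f x - (n x)%:R / N|) - Mb Psi <= W_B_nat n n Psi.
Proof.
move=> N0 hnu.
have hh : forall x, 0 <= (n x)%:R / N by move=> x; rewrite divr_ge0 // ltW.
have [nu' [h1 h2]] := transfer Psi hh hnu.
have h3 := scale_feas (c := N) (h := fun x => (n x)%:R) (ltW N0)
   (fun x => divfK (lt0r_neq0 N0) _) h1.
have [mu [h4 h5]] := rounding Psi h3.
have h6 := WBnat_ge Psi h4.
rewrite val_scale in h5.
have h7 := ler_wpM2l (ltW N0) h2.
rewrite mulrC in h5; lra.
Qed.

End Bounds.
Theorem proposition2 (R : realType) (X : finType) (x0 : X)
  (Phi : X -> X -> R) (Phi_sym : forall x y, Phi x y = Phi y x)
  (n : nat -> X -> nat) (f : X -> R)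
  (hN : (fun k => ((\sum_x n k x)%N)%:R : R) @ \oo --> +oo)
  (hf : forall x, (fun k => (n k x)%:R / ((\sum_y n k y)%N)%:R : R) @ \oo --> f x) :
  ((fun k => W_P (n k) Phi / ((\sum_x n k x)%N)%:R) @ \oo
     --> W_B_real f f (fun x y => Phi x y / 2)) /\
  ((fun k => W_B_nat (n k) (n k) (fun x y => Phi x y / 2) / ((\sum_x n k x)%N)%:R) @ \oo
     --> W_B_real f f (fun x y => Phi x y / 2)).
Proof.
have f0 : forall x, 0 <= f x.
  move=> x.
  apply: (cvgr_to_ge (hf x)).
  by apply: nearW => k; rewrite divr_ge0.
set Psi := fun x y => Phi x y / 2.
set V := W_B_real f f Psi.
set M := Mb Psi.
set C := Mb Phi.
have M0 : 0 <= M := Mb_ge0 Psi.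
have C0 : 0 <= C := Mb_ge0 Phi.
pose Kc : R := #|X|%:R.
have Kc0 : 0 < Kc by rewrite /Kc ltr0n; apply/card_gt0P; exists x0.
suff main : forall e, 0 < e -> \forall k \near \oo,
   `|V - W_P (n k) Phi / ((\sum_x n k x)%N)%:R| <= e /\
   `|V - W_B_nat (n k) (n k) Psi / ((\sum_x n k x)%N)%:R| <= e.
  split; apply/cvgrPdist_le => e e0; apply: (filterS _ (main e e0)) => k [] //.
move=> e e0.
have MK0 : 0 <= M * Kc by rewrite mulr_ge0 // ltW.
have den0 : 0 < 2 * (2 * M * Kc + M + C + 1) by lra.
pose d := e / (2 * (2 * M * Kc + M + C + 1)).
have d0 : 0 < d by rewrite /d divr_gt0.
have dQ : d * (2 * (2 * M * Kc + M + C + 1)) = e by rewrite /d divfK // gt_eqF.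
have H1 := cvgry_ge hN d^-1.
have H2 : \forall k \near \oo, forall x,
    `|f x - (n k x)%:R / ((\sum_y n k y)%N)%:R| <= d.
  by apply: filter_forall => x; exact: ((cvgrPdist_le _ _).1 (hf x) d d0).
near=> k.
have hk1 : d^-1 <= ((\sum_x n k x)%N)%:R by near: k; exact: H1.
have hk2 : forall x, `|f x - (n k x)%:R / ((\sum_y n k y)%N)%:R| <= d by near: k; exact: H2.
set Nk := ((\sum_x n k x)%N)%:R : R.
have Nk0 : 0 < Nk by apply: lt_le_trans hk1; rewrite invr_gt0.
have iN : Nk^-1 <= d by rewrite invf_ple ?posrE.
set D1 := \sum_x `|f x - (n k x)%:R / Nk|.
have D1b : D1 <= Kc * d.
  apply: le_trans (ler_sum _ (fun x _ => hk2 x)) _.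
  by rewrite sumr_const -mulr_natr mulrC.
have D2e : \sum_x `|(n k x)%:R / Nk - f x| = D1.
  by apply: eq_bigr => x _; rewrite distrC.
have U := upperU (n k) Psi f0 Nk0; rewrite D2e in U.
have e20 : 0 < e / 2 by rewrite divr_gt0.
have [nu [hnu hV]] := WBreal_approx Psi f0 e20.
have L := lowerL (n k) Psi Nk0 hnu.
have P1 : W_P (n k) Phi <= W_B_nat (n k) (n k) Psi.
  apply: WP_le => mu hmu; rewrite S_R_val; apply: WBnat_ge; exact: room_feas.
have P2 : W_B_nat (n k) (n k) Psi <= W_P (n k) Phi + C.
  apply: WBnat_le => nu' h; have [mu [hm hv]] := bip_to_room Phi_sym h.
  have := WP_ge Phi hm; rewrite /C; lra.
set WB := W_B_nat (n k) (n k) Psi.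
set WP := W_P (n k) Phi.
have aU : WB / Nk <= V + 2 * M * D1 by rewrite ler_pdivrMr // mulrC.
have aL : val Psi nu - 2 * M * D1 - M / Nk <= WB / Nk.
  rewrite ler_pdivlMr //.
  have -> : (val Psi nu - 2 * M * D1 - M / Nk) * Nk =
            Nk * (val Psi nu - 2 * M * D1) - M by field; rewrite gt_eqF.
  exact: L.
have Ni0 : 0 <= Nk^-1 by rewrite invr_ge0 ltW.
have pU : WP / Nk <= WB / Nk by exact: ler_wpM2r.
have pL : WB / Nk - C / Nk <= WP / Nk.
  rewrite -mulrBl; apply: ler_wpM2r => //; rewrite lerBlDr; exact: P2.
have t1 : M / Nk <= M * d by exact: ler_wpM2l.
have t2 : C / Nk <= C * d by exact: ler_wpM2l.
have t3 : M * D1 <= M * (Kc * d) by exact: ler_wpM2l.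
have hV2 : V - e / 2 < val Psi nu by exact: hV.
have q1 : 0 <= M * d by rewrite mulr_ge0 // ltW.
have q2 : 0 <= C * d by rewrite mulr_ge0 // ltW.
have q3 : 0 <= M * (Kc * d) by rewrite mulr_ge0 // mulr_ge0 // ltW.
split; rewrite ler_distl; apply/andP; split; lra.
Unshelve. all: end_near.
Qed.
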